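(* Let $q\ge2$, $r\ge1$, $\rho\ge2$, $s\ge1$ be integers, $N=r+\rho-1$, $n=sN$, and $\mathcal{R}_{t+1}=\{tN+1,\dots,(t+1)N\}$ for $t=0,\dots,s-1$. Let $\mathcal{C}\subseteq Q^n$ ($|Q|=q$) be a code with minimum distance $d$ such that $\mathcal{C}|_{\mathcal{R}_i}$ has minimum distance at least $\rho$ for all $i$. Let $T:=\{\mathbf{i}=(i_1,\dots,i_s)\mid i_1+\cdots+i_s\ge d,\ i_j\in\{0,\rho,\rho+1,\dots,N\}\ \forall j\}$. Let $f(\mathbf{x})=f(x_1,\dots,x_s)$ be a polynomial of the form $$f(\mathbf{x})=1+\sum_{\mathbf{j}\in\{0,\dots,N\}^s\setminus\{\underline0\}}f_{\mathbf{j}}K^{(N)}_{\mathbf{j}}(\mathbf{x})$$ with (i) $f_{\mathbf{j}}\ge0$ for all $\mathbf{j}\in\{0,\dots,N\}^s\setminus\{\underline0\}$ and (ii) $f(\mathbf{i})\le0$ for all $\mathbf{i}\in T$. Then $|\mathcal{C}|\le f(\underline0)$.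
   Context: The Krawtchouk polynomial is $K_j^{(N)}(x)=\sum_{l=0}^j(-1)^l(q-1)^{j-l}\binom xl\binom{N-x}{j-l}$, and $K^{(N)}_{\mathbf{j}}(\mathbf{x})=\prod_{p=1}^sK^{(N)}_{j_p}(x_p)$ for $\mathbf{j}=(j_1,\dots,j_s)$; $\underline0=(0,\dots,0)$. Minimum distance refers to Hamming distance; $\mathcal{C}|_{\mathcal{R}_i}$ is the projection onto coordinates in $\mathcal{R}_i$. *)

(* Defs.v *)
From HB Require Import structures.
From mathcomp Require Import all_boot all_order all_algebra.
From mathcomp Require Export reals.
Set Implicit Arguments. Unset Strict Implicit. Unset Printing Implicit Defensive.
Import Order.TTheory GRing.Theory Num.Theory.
Local Open Scope ring_scope.

Definition kraw (R : realType) (q N j x : nat) : R :=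
  \sum_(l < j.+1) (-1) ^+ l * ((q - 1)%:R) ^+ (j - l)
                  * ('C(x, l) * 'C(N - x, j - l))%:R.

Definition kraw_multi (R : realType) (q N s : nat) (j x : 'I_s -> nat) : R :=
  \prod_(p < s) kraw R q N (j p) (x p).

Definition LPpoly (R : realType) (q N s : nat)
    (fc : {ffun 'I_s -> 'I_N.+1} -> R) (x : 'I_s -> nat) : R :=
  1 + \sum_(j : {ffun 'I_s -> 'I_N.+1} | j != [ffun=> ord0])
        fc j * kraw_multi R q N (fun p => nat_of_ord (j p)) x.

Definition hamming (Q : finType) (m : nat) (x y : {ffun 'I_m -> Q}) : nat :=
  #|[set i | x i != y i]|.

Definition min_dist (Q : finType) (m : nat) (C : {set {ffun 'I_m -> Q}}) (d : nat) : Prop :=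
  (forall x y, x \in C -> y \in C -> x != y -> (d <= hamming x y)%N) /\
  (exists x y, [/\ x \in C, y \in C, x != y & hamming x y = d]).

(* C has minimum distance at least d (vacuous if |C| <= 1). *)
Definition min_dist_ge (Q : finType) (m : nat) (C : {set {ffun 'I_m -> Q}}) (d : nat) : Prop :=
  forall x y, x \in C -> y \in C -> x != y -> (d <= hamming x y)%N.

(* Coordinate k of the block R_{t+1} = {tN+1,...,(t+1)N} (0-based: tN + k). *)
Lemma blk_lt (s N : nat) (t : 'I_s) (k : 'I_N) : (t * N + k < s * N)%N.
Proof.
have hk := ltn_ord k; have ht := ltn_ord t.
apply: (@leq_trans (t * N + N)%N); first by rewrite ltn_add2l.
by rewrite -[(t * N + N)%N]mulSnr leq_mul2r ht orbT.
Qed.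

Definition blk (s N : nat) (t : 'I_s) (k : 'I_N) : 'I_(s * N) := Ordinal (blk_lt t k).

Definition proj_blk (Q : finType) (s N : nat) (t : 'I_s) (c : {ffun 'I_(s * N) -> Q})
  : {ffun 'I_N -> Q} := [ffun k => c (blk t k)].

Definition proj_code (Q : finType) (s N : nat) (t : 'I_s) (C : {set {ffun 'I_(s * N) -> Q}})
  : {set {ffun 'I_N -> Q}} := [set proj_blk t c | c in C].

(* Main.v *)
Require Import Defs.
From mathcomp Require Import all_boot all_order all_algebra.
From mathcomp Require Import reals.
Import Order.TTheory GRing.Theory Num.Theory.
Local Open Scope ring_scope.

From mathcomp Require Import ring lra zify.
Set Implicit Arguments. Unset Strict Implicit.

Section Gram.
Variables (R : realType) (W : Type).

Definition gram (k : W -> W -> R) :=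
  exists s : seq (W -> R), forall x y, k x y = \sum_(f <- s) f x * f y.

Lemma gram_ext {k k'} : gram k -> (forall x y, k x y = k' x y) -> gram k'.
Proof. by move=> [s hs] e; exists s => x y; rewrite -e hs. Qed.

Lemma gram0 : gram (fun _ _ => 0).
Proof. by exists [::] => x y; rewrite big_nil. Qed.

Lemma gram1 : gram (fun _ _ => 1).
Proof. by exists [:: fun _ => 1] => x y; rewrite big_seq1 mulr1. Qed.

Lemma gramD k1 k2 : gram k1 -> gram k2 -> gram (fun x y => k1 x y + k2 x y).
Proof. by move=> [s1 h1] [s2 h2]; exists (s1 ++ s2) => x y; rewrite big_cat h1 h2. Qed.

Lemma gramM k1 k2 : gram k1 -> gram k2 -> gram (fun x y => k1 x y * k2 x y).
Proof.
move=> [s1 h1] [s2 h2].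
exists [seq (fun x => f x * g x) | f <- s1, g <- s2] => x y.
rewrite big_allpairs_dep h1 h2 big_distrl /=; apply: eq_bigr => f _.
rewrite big_distrr /=; apply: eq_bigr => g _; ring.
Qed.

Lemma gramZ c k : 0 <= c -> gram k -> gram (fun x y => c * k x y).
Proof.
move=> c0 [s h]; exists [seq (fun x => Num.sqrt c * f x) | f <- s] => x y.
rewrite big_map h big_distrr /=; apply: eq_bigr => f _.
have := sqr_sqrtr c0; rewrite expr2 => e.
by rewrite -[in LHS]e; ring.
Qed.

Lemma gram_sum (I : Type) (r : seq I) (P : pred I) (k : I -> W -> W -> R) :
  (forall i, P i -> gram (k i)) -> gram (fun x y => \sum_(i <- r | P i) k i x y).
Proof.
move=> h; elim: r => [|i r IH].
  by apply: (gram_ext gram0) => x y; rewrite big_nil.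
case Pi: (P i).
  by apply: (gram_ext (gramD (h i Pi) IH)) => x y; rewrite big_cons Pi.
by apply: (gram_ext IH) => x y; rewrite big_cons Pi.
Qed.

Lemma gram_prod (I : Type) (r : seq I) (k : I -> W -> W -> R) :
  (forall i, gram (k i)) -> gram (fun x y => \prod_(i <- r) k i x y).
Proof.
move=> h; elim: r => [|i r IH].
  by apply: (gram_ext gram1) => x y; rewrite big_nil.
by apply: (gram_ext (gramM (h i) IH)) => x y; rewrite big_cons.
Qed.

Lemma gram_ge0 (T : finType) (C : {set T}) (emb : T -> W) k : gram k ->
  0 <= \sum_(x in C) \sum_(y in C) k (emb x) (emb y).
Proof.
move=> [s h].
have -> : \sum_(x in C) \sum_(y in C) k (emb x) (emb y) =
          \sum_(f <- s) (\sum_(x in C) f (emb x)) ^+ 2.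
  under eq_bigr => x _ do under eq_bigr => y _ do rewrite h.
  under eq_bigr => x _ do rewrite exchange_big /=.
  rewrite exchange_big /=; apply: eq_bigr => f _.
  rewrite expr2 big_distrl /=; apply: eq_bigr => x _.
  by rewrite big_distrr /=.
by apply: sumr_ge0 => f _; apply: sqr_ge0.
Qed.
End Gram.
Set Implicit Arguments. Unset Strict Implicit.

Section K.
Variables (R : realType) (q : nat).

Lemma kraw0 m d : kraw R q m 0 d = 1.
Proof. by rewrite /kraw big_ord1 !expr0 !bin0 mul1r mul1r. Qed.

Lemma kraw_nil j : kraw R q 0 j.+1 0 = 0.
Proof.
rewrite /kraw big1 // => l _.
case: (nat_of_ord l) => [|l']; first by rewrite bin0 sub0n bin0n /= mulr0.
by rewrite bin0n mul0n mulr0.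
Qed.

Lemma kraw_eq m j d : (d <= m)%N ->
  kraw R q m.+1 j.+1 d = kraw R q m j.+1 d + (q - 1)%:R * kraw R q m j d.
Proof.
move=> hd; rewrite /kraw (subSn hd) big_ord_recr [X in _ = X + _]big_ord_recr /=.
rewrite subnn !bin0 -addrA [X in _ = _ + X]addrC addrA; congr (_ + _).
rewrite mulr_sumr -big_split /=; apply: eq_bigr => i _.
have hi : (i <= j)%N by rewrite -ltnS.
rewrite (subSn hi) binS !natrM natrD exprS; ring.
Qed.

Lemma kraw_neq m j d :
  kraw R q m.+1 j.+1 d.+1 = kraw R q m j.+1 d - kraw R q m j d.
Proof.
rewrite /kraw subSS big_ord_recl [X in _ = X - _]big_ord_recl /=.
rewrite !bin0 -addrA; congr (_ + _).
rewrite -sumrN -big_split /=; apply: eq_bigr => i _.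
rewrite /bump /= !add1n !subSS binS natrM natrD !natrM exprS; ring.
Qed.
End K.
Set Implicit Arguments. Unset Strict Implicit.

Section E.
Variables (R : realType) (Q : finType) (W : Type).

Definition ek (a b : Q) : R := #|Q|%:R * (a == b)%:R - 1.

Lemma sum_delta (a : Q) (F : Q -> R) : \sum_c (a == c)%:R * F c = F a.
Proof.
rewrite (bigD1 a) //= eqxx mul1r big1 ?addr0 // => c /negbTE.
by rewrite eq_sym => ->; rewrite mul0r.
Qed.

Lemma gram_e (pi : W -> Q) : gram (fun x y => ek (pi x) (pi y)).
Proof.
set q : R := #|Q|%:R.
exists [seq (fun x => Num.sqrt q * ((pi x == c)%:R - q^-1)) | c <- index_enum Q].
move=> x y; rewrite big_map.
have q0 : q != 0 by rewrite pnatr_eq0 -lt0n; apply/card_gt0P; exists (pi x).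
have hs : Num.sqrt q * Num.sqrt q = q by rewrite -expr2 sqr_sqrtr // ler0n.
rewrite (eq_bigr (fun c => q * ((pi x == c)%:R * (pi y == c)%:R) - (pi x == c)%:R
    - (pi y == c)%:R * 1 + q^-1)); last first.
  by move=> c _; rewrite mulrACA hs; field.
rewrite big_split /= !sumrB -mulr_sumr !sum_delta sumr_const eq_sym.
have -> : \sum_(c : Q) (pi x == c)%:R = \sum_(c : Q) (pi x == c)%:R * (1:R).
  by apply: eq_bigr => c _; rewrite mulr1.
rewrite sum_delta /ek -/q -(mulr_natr q^-1).
have -> : (#|@predT Q|)%:R = q by [].
rewrite mulVf //; ring.
Qed.
End E.
Set Implicit Arguments. Unset Strict Implicit.

Section D.
Variables (R : realType) (Q : finType) (W : Type).

Definition dist (ps : seq (W -> Q)) x y := count (fun pi => pi x != pi y) ps.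

Lemma gram_kraw ps j : gram (fun x y => kraw R #|Q| (size ps) j (dist ps x y)).
Proof.
elim: ps j => [|pi ps IH] [|j].
- by apply: (gram_ext (gram1 R W)) => x y; rewrite kraw0.
- by apply: (gram_ext (gram0 R W)) => x y; rewrite /= kraw_nil.
- by apply: (gram_ext (gram1 R W)) => x y; rewrite kraw0.
apply: (gram_ext (gramD (IH j.+1) (gramM (gram_e R pi) (IH j)))) => x y /=.
rewrite /dist /=; case: eqP => [e|ne] /=.
  have hQ : (0 < #|Q|)%N by apply/card_gt0P; exists (pi x).
  by rewrite add0n kraw_eq ?count_size // /ek e eqxx mulr1 natrB.
by rewrite add1n kraw_neq /ek (introF eqP ne) mulr0 sub0r mulN1r.
Qed.

Lemma dist_xx ps x : dist ps x x = 0%N.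
Proof. by elim: ps => //= pi ps ->; rewrite eqxx. Qed.
End D.

Lemma cnt (T : finType) (p : pred T) : count p (enum T) = #|[set k | p k]|.
Proof. by rewrite -sum1_count cardsE -sum1_card big_enum_cond. Qed.

Lemma cnt2 (T : finType) (p : pred T) : #|[set k | p k]| = (\sum_k (p k : nat))%N.
Proof. by rewrite -cnt -sum1_count big_mkcond /= -big_enum. Qed.

Lemma sum_blk s N (g : 'I_(s*N) -> nat) :
  (\sum_i g i = \sum_(t < s) \sum_(k < N) g (blk t k))%N.
Proof.
rewrite pair_bigA /= (reindex (fun p : 'I_s * 'I_N => blk p.1 p.2)) //=.
apply: onW_bij; apply: inj_card_bij; last by rewrite card_prod !card_ord.
move=> [t k] [t' k'] /(congr1 val) /= e.
have hN : (0 < N)%N by apply: leq_ltn_trans (ltn_ord k).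
have := congr1 (divn^~ N) e; rewrite !divnMDl // !divn_small // !addn0 => ett'.
have := congr1 (modn^~ N) e; rewrite !modnMDl !modn_small // => ekk'.
by congr pair; apply: val_inj.
Qed.

Lemma LPpoly_ext (R : realType) q N s fc (x x' : 'I_s -> nat) :
  (forall p, x p = x' p) -> @LPpoly R q N s fc x = @LPpoly R q N s fc x'.
Proof.
move=> e; rewrite /LPpoly /kraw_multi; congr (1 + _); apply: eq_bigr => j _.
by congr (_ * _); apply: eq_bigr => p _; rewrite e.
Qed.

Unset Implicit Arguments.

Theorem corollary3 (R : realType) (q r rho s N d : nat) (Q : finType)
    (hq : (2 <= q)%N) (hr : (1 <= r)%N) (hrho : (2 <= rho)%N) (hs : (1 <= s)%N)
    (hN : N = (r + rho - 1)%N) (hQ : #|Q| = q)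
    (C : {set {ffun 'I_(s * N) -> Q}})
    (hd : min_dist C d)
    (hproj : forall t : 'I_s, min_dist_ge (proj_code t C) rho)
    (fc : {ffun 'I_s -> 'I_N.+1} -> R)
    (hf_nonneg : forall j : {ffun 'I_s -> 'I_N.+1}, j != [ffun=> ord0] -> 0 <= fc j)
    (hf_T : forall i : {ffun 'I_s -> 'I_N.+1},
        (d <= \sum_(p < s) i p)%N ->
        (forall p, (i p == 0 :> nat) || (rho <= i p)%N) ->
        @LPpoly R q N s fc (fun p => nat_of_ord (i p)) <= 0) :
  (#|C|)%:R <= @LPpoly R q N s fc (fun _ => 0%N).
Proof.
pose W := {ffun 'I_(s * N) -> Q}.
pose ps (t : 'I_s) : seq (W -> Q) := [seq (fun c : W => c (blk t k)) | k <- enum 'I_N].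
have size_ps t : size (ps t) = N by rewrite size_map size_enum_ord.
have Dham t x y : dist (ps t) x y = hamming (proj_blk t x) (proj_blk t y).
  rewrite /dist count_map /hamming cnt; apply: eq_card => k.
  by rewrite !inE /= !ffunE.
have hamsum (x y : W) : hamming x y = (\sum_(t < s) dist (ps t) x y)%N.
  rewrite /hamming cnt2 sum_blk; apply: eq_bigr => t _.
  by rewrite /dist count_map cnt cnt2.
case: hd => hd1 [x0 [y0 [hx0 _ _ _]]].
have C0 : (0 < #|C|)%N by apply/card_gt0P; exists x0.
pose LP (x y : W) := @LPpoly R q N s fc (fun p => dist (ps p) x y).
pose Kx (x y : W) := \sum_(j : {ffun 'I_s -> 'I_N.+1} | j != [ffun=> ord0])
   fc j * kraw_multi R q N (fun p => nat_of_ord (j p)) (fun p => dist (ps p) x y).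
have LPK x y : LP x y = 1 + Kx x y by [].
have gk p j' : gram (fun x y : W => kraw R q N j' (dist (ps p) x y)).
  by have := gram_kraw R (ps p) j'; rewrite size_ps hQ.
have gK : gram Kx.
  apply: gram_sum => j hj; apply: gramZ (hf_nonneg j hj) _.
  rewrite /kraw_multi; exact: gram_prod.
set F0 := LPpoly _ _ _.
have low : (#|C|%:R) ^+ 2 <= \sum_(x in C) \sum_(y in C) LP x y.
  rewrite (eq_bigr (fun x => #|C|%:R + \sum_(y in C) Kx x y)); last first.
    by move=> x _; rewrite (eq_bigr _ (fun y _ => LPK x y)) big_split /= sumr_const.
  rewrite big_split /= sumr_const -(mulr_natr (#|C|%:R : R)) -expr2 lerDl.
  exact: (gram_ge0 C (fun x : W => x) gK).
have up : \sum_(x in C) \sum_(y in C) LP x y <= \sum_(x in C) F0.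
  apply: ler_sum => x hx; rewrite (bigD1 x) //=.
  have -> : LP x x = F0 by apply: LPpoly_ext => p; rewrite dist_xx.
  rewrite -[leRHS]addr0 lerD2l; apply: sumr_le0 => y /andP [hy hyx].
  pose i := [ffun p => inord (dist (ps p) x y) : 'I_N.+1].
  have hi p : nat_of_ord (i p) = dist (ps p) x y.
    by rewrite ffunE inordK // ltnS -[X in (_ <= X)%N](size_ps p) count_size.
  have <- : @LPpoly R q N s fc (fun p => nat_of_ord (i p)) = LP x y.
    by apply: LPpoly_ext => p; rewrite hi.
  apply: hf_T.
    rewrite (eq_bigr _ (fun p _ => hi p)) -hamsum; apply: hd1 => //.
    by rewrite eq_sym.
  move=> p; rewrite hi Dham.
  case: (eqVneq (proj_blk p x) (proj_blk p y)) => [->|ne].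
    rewrite /hamming; have -> : [set k | proj_blk p y k != proj_blk p y k] = set0.
      by apply/setP => k; rewrite !inE eqxx.
    by rewrite cards0.
  apply/orP; right; apply: hproj ne; exact: imset_f.
have := le_trans low up; rewrite sumr_const -(mulr_natr F0) expr2 [F0 * _]mulrC.
have hC : (0:R) < #|C|%:R by rewrite ltr0n.
by rewrite (ler_pM2l hC).
Qed.
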